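(* Let $a, b, n$ be positive integers with $b>1$, $n>1$ and $\gcd(r_b(n),a)=1$. Then \[\operatorname{Ap}(S_a(b,n)) = \left\{ \sum_{i=2}^n u_i a_i \;\middle|\; (u_2,\ldots,u_n) \in R(b,n)\right\}.\]
   Context: For an integer $\ell \ge 1$, $r_b(\ell) = \sum_{j=0}^{\ell-1} b^j$, and $r_b(0)=0$. For $i \ge 1$, $a_i := r_b(n) + a\, r_b(i-1)$; $S_a(b,n)$ is the numerical semigroup generated by $\{a_i : i\ge 1\}$ (its multiplicity is $a_1$). For a numerical semigroup $S$ and $s\in S$, $\operatorname{Ap}(S,s) = \{\omega \in S : \omega - s \notin S\}$, and $\operatorname{Ap}(S) := \operatorname{Ap}(S, \operatorname{m}(S))$ where $\operatorname{m}(S)$ is the smallest nonzero element of $S$. For $i\ge 2$, $R(b,i)$ is the set of $(u_2,\ldots,u_i) \in \mathbb{N}^{i-1}$ with $0 \le u_j \le b$ for all $j$, and such that $u_j = b$ implies $u_k = 0$ for all $2\le k<j$. *)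

(* Defs.v *)
From mathcomp Require Import all_boot.
Set Implicit Arguments. Unset Strict Implicit. Unset Printing Implicit Defensive.

Definition rb (b l : nat) : nat := \sum_(0 <= j < l) b ^ j.

Definition gen_a (a b n i : nat) : nat := rb b n + a * rb b (i - 1).

Inductive gen_monoid (G : nat -> Prop) : nat -> Prop :=
| gm0 : gen_monoid G 0
| gmS x g : gen_monoid G x -> G g -> gen_monoid G (x + g).

Definition Sa (a b n : nat) : nat -> Prop :=
  gen_monoid (fun g => exists i, 1 <= i /\ g = gen_a a b n i).

Definition is_multiplicity (S : nat -> Prop) (m : nat) : Prop :=
  S m /\ 0 < m /\ (forall y, S y -> 0 < y -> m <= y).

(* Ap(S, s) = { w in S : w - s notin S } (w - s taken in Z, so w < s counts) *)
Definition Apery (S : nat -> Prop) (s w : nat) : Prop :=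
  S w /\ (w < s \/ ~ S (w - s)).

Definition Apery_m (S : nat -> Prop) (w : nat) : Prop :=
  exists m, is_multiplicity S m /\ Apery S m w.

(* R(b,i): (u_2,...,u_i) with 0 <= u_j <= b and u_j = b -> u_k = 0 for 2<=k<j.
   Represented by u : nat -> nat, only the entries 2..i are relevant. *)
Definition inR (b i : nat) (u : nat -> nat) : Prop :=
  (forall j, 2 <= j <= i -> u j <= b) /\
  (forall j, 2 <= j <= i -> u j = b -> forall k, 2 <= k < j -> u k = 0).

(* Main.v *)
Require Import Defs.
From mathcomp Require Import zify.
From mathcomp Require Import all_boot.
Set Implicit Arguments. Unset Strict Implicit.

Lemma rb0 b : rb b 0 = 0.
Proof. by rewrite /rb big_geq. Qed.

Lemma rbS b l : rb b l.+1 = 1 + b * rb b l.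
Proof.
rewrite /rb big_nat_recl // expn0 big_distrr /=; congr (_ + _).
by apply: eq_bigr => i _; rewrite expnS.
Qed.

Lemma rb_pos b l : 0 < l -> 0 < rb b l.
Proof. by case: l => // l _; rewrite rbS. Qed.

Lemma rb_lt b j l : 1 < b -> j < l -> rb b j < rb b l.
Proof.
move=> hb; elim: l => // l IH; rewrite ltnS leq_eqVlt => /orP[/eqP->|/IH h].
  rewrite rbS; nia.
rewrite rbS; nia.
Qed.

Lemma rb_add b n k : rb b (n + k) = rb b k + b ^ k * rb b n.
Proof.
elim: k => [|k IH]; first by rewrite addn0 rb0 expn0 mul1n.
by rewrite addnS !rbS IH expnS; nia.
Qed.

Fixpoint G (b l K : nat) : nat :=
  match l with 0 => 0 | l'.+1 => K %/ rb b l' + G b l' (K %% rb b l') end.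

Lemma G_S b l d k : 0 < rb b l -> k < rb b l -> G b l.+1 (d * rb b l + k) = d + G b l k.
Proof.
move=> h1 h2 /=; rewrite divnMDl // divn_small // addn0.
by rewrite modnMDl modn_small.
Qed.

Lemma G_S' b l d k r : r = rb b l -> 0 < r -> k < r -> G b l.+1 (d * r + k) = d + G b l k.
Proof. by move=> ->; apply: G_S. Qed.

Lemma G0 b l : G b l 0 = 0.
Proof. by elim: l => //= l IH; rewrite div0n mod0n IH. Qed.

Lemma Gtop b l : G b l (rb b l - 1) <= b.
Proof.
case: l => // l; rewrite rbS addKn.
case: l => [|l]; first by rewrite /= rb0 divn0.
by rewrite -[b * _]addn0 G_S ?rb_pos // G0 addn0.
Qed.

Lemma rb_le b j l : 1 < b -> j <= l -> rb b j <= rb b l.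
Proof.
move=> hb; rewrite leq_eqVlt => /orP[/eqP->//|h]; exact/ltnW/rb_lt.
Qed.

Lemma Gsmall b j l x : 1 < b -> j <= l -> x < rb b j -> G b l x = G b j x.
Proof.
move=> hb; elim: l => [|l IH]; first by rewrite leqn0 => /eqP->.
rewrite leq_eqVlt => /orP[/eqP->//|]; rewrite ltnS => hjl hx /=.
have hx' : x < rb b l by apply: leq_trans hx (rb_le hb hjl).
by rewrite divn_small // modn_small // IH.
Qed.

Lemma Gdec b l K : 1 < b -> 0 < K -> K < rb b l -> G b l (K - 1) <= G b l K + (b - 1).
Proof.
move=> hb; elim: l K => [|l IH] K hK; first by rewrite rb0.
move=> hKl.
case: l IH hKl => [|l] IH hKl; first by move: hKl; rewrite rbS rb0; lia.
have [r er] : {r | r = rb b l.+1} by eexists.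
have hr : 0 < r by rewrite er; apply: rb_pos.
rewrite -er in hKl IH *.
have eK := divn_eq K r.
set d := K %/ r in eK *; set K1 := K %% r in eK *.
have hK1 : K1 < r by rewrite ltn_mod.
clearbody d K1.
rewrite eK (@G_S' _ _ _ _ _ er) //.
case: (posnP K1) => hK1z.
  rewrite hK1z in eK *.
  case: d eK => [|d'] eK; first by move: hK; rewrite eK; lia.
  have -> : d'.+1 * r + 0 - 1 = d' * r + (r - 1).
  rewrite mulSn. lia.
  rewrite (@G_S' _ _ _ _ _ er) //; last by lia.
  have := Gtop b l.+1; rewrite G0 -er; lia.
have -> : d * r + K1 - 1 = d * r + (K1 - 1) by lia.
rewrite (@G_S' _ _ _ _ _ er) //; last by lia.
have := IH K1 hK1z hK1; lia.
Qed.

Lemma mul_succ_le d b r : d < b -> d * r + r <= b * r.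
Proof. by move=> h; rewrite addnC -mulSn leq_mul2r h orbT. Qed.

Lemma Pstep b l K j : 1 < b -> K < rb b l -> 0 < j < l ->
  (K + rb b j < rb b l -> G b l (K + rb b j) <= G b l K + 1) /\
  (rb b l <= K + rb b j -> G b l (K + rb b j - rb b l) <= G b l K).
Proof.
move=> hb; elim: l K j => [|l IH] K j; first by lia.
move=> hKl /andP[hj0 hjl].
case: (posnP l) => hl; first by lia.
have [r er] : {r | r = rb b l} by eexists.
have hr : 0 < r by rewrite er; apply: rb_pos.
rewrite rbS -er in hKl *.
have eK := divn_eq K r.
set d := K %/ r in eK *; set K1 := K %% r in eK *.
have hK1 : K1 < r by rewrite ltn_mod.
clearbody d K1.
have hd : d <= b.
  rewrite -(leq_pmul2r hr); move: hKl; rewrite eK; lia.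
have hdb : d = b -> K1 = 0 by move=> e; move: hKl; rewrite eK e; lia.
have Gsm : forall x, x < r -> G b l.+1 x = G b l x.
  by move=> x hx; apply: Gsmall => //; rewrite -er.
rewrite eK (@G_S' _ _ _ _ _ er) //.
have hjl' : j <= l by lia.
case: (ltnP j l) => hjl2; last first.
  have ej : j = l by lia.
  rewrite ej -er; split.
    move=> _; have -> : d * r + K1 + r = d.+1 * r + K1 by rewrite mulSn; lia.
    by rewrite (@G_S' _ _ _ _ _ er) //; lia.
  move=> hw.
  case: (ltnP d b) => hdb2; last first.
    have ed : d = b by lia.
    rewrite (hdb ed) ed.
    have -> : b * r + 0 + r - (1 + b * r) = r - 1 by lia.
    rewrite Gsm; last by lia.
    have := Gtop b l; rewrite G0 -er; lia.
  have ed : d.+1 = b.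
    case: (ltnP d.+1 b) => h; last by lia.
    have := mul_succ_le r h; rewrite mulSn; lia.
  have ebr : b * r = d * r + r by rewrite -ed mulSn; lia.
  have hK1p : 0 < K1 by lia.
  have -> : d * r + K1 + r - (1 + b * r) = K1 - 1 by lia.
  rewrite Gsm; last by lia.
  have := @Gdec b l K1 hb hK1p; rewrite -er => /(_ hK1); lia.
have hrj : rb b j < r by rewrite er; apply: rb_lt.
have hrj0 : 0 < rb b j by apply: rb_pos.
case: (ltnP d b) => hdb2; last first.
  have ed : d = b by lia.
  rewrite (hdb ed) ed; split; first by lia.
  move=> _.
  have -> : b * r + 0 + rb b j - (1 + b * r) = rb b j - 1 by lia.
  rewrite Gsm; last by lia.
  rewrite (@Gsmall b j l); [|done|lia|lia].
  have := Gtop b j; rewrite G0; lia.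
have hdr := mul_succ_le r hdb2.
have hK1' : K1 < rb b l by rewrite -er.
have hj' : 0 < j < l by rewrite hj0.
have [IHa IHb] := IH K1 j hK1' hj'.
rewrite -er in IHa IHb.
case: (ltnP (K1 + rb b j) r) => hs.
  split; last by lia.
  move=> _; have -> : d * r + K1 + rb b j = d * r + (K1 + rb b j) by lia.
  rewrite (@G_S' _ _ _ _ _ er) //; have := IHa hs; lia.
have IHb' := IHb hs.
set K2 := K1 + rb b j - r in IHb'.
have hK2 : K2 < r by rewrite /K2; lia.
have eK2 : d * r + K1 + rb b j = d.+1 * r + K2 by rewrite mulSn /K2; lia.
clearbody K2.
rewrite eK2; split.
  by move=> _; rewrite (@G_S' _ _ _ _ _ er) //; lia.
move=> hw.
have ed : d.+1 = b.
  case: (ltnP d.+1 b) => h; last by lia.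
  have := mul_succ_le r h; move: hw; rewrite !mulSn; lia.
have ebr : b * r = d * r + r by rewrite -ed mulSn; lia.
have hK2p : 0 < K2 by move: hw; rewrite mulSn; lia.
have -> : d.+1 * r + K2 - (1 + b * r) = K2 - 1 by rewrite mulSn; lia.
rewrite Gsm; last by lia.
have := @Gdec b l K2 hb hK2p; rewrite -er => /(_ hK2); lia.
Qed.

Lemma Ttrans b n t K : 1 < b -> 0 < n ->
  G b n ((K + rb b t) %% rb b n) + K %/ rb b n <=
  G b n (K %% rb b n) + 1 + (K + rb b t) %/ rb b n.
Proof.
move=> hb hn; elim/ltn_ind: t K => t IH K.
have [m em] : {m | m = rb b n} by eexists.
have hm : 0 < m by rewrite em; apply: rb_pos.
rewrite -em.
case: (posnP t) => ht; first by rewrite ht rb0 addn0; lia.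
case: (ltnP t n) => htn.
  have eK := divn_eq K m.
  set q := K %/ m in eK *; set K0 := K %% m in eK *.
  have hK0 : K0 < m by rewrite ltn_mod.
  clearbody q K0.
  have hrt : rb b t < m by rewrite em; apply: rb_lt.
  have [Pa Pb] := @Pstep b n K0 t hb ltac:(by rewrite -em) ltac:(by rewrite ht htn).
  rewrite -em in Pa Pb.
  rewrite eK.
  case: (ltnP (K0 + rb b t) m) => hs.
    rewrite -addnA divnMDl // modnMDl (modn_small hs) (divn_small hs).
    have := Pa hs; lia.
  have -> : q * m + K0 + rb b t = q.+1 * m + (K0 + rb b t - m) by rewrite mulSn; lia.
  have hs2 : K0 + rb b t - m < m by lia.
  rewrite divnMDl // modnMDl (modn_small hs2) (divn_small hs2).
  have := Pb hs; lia.
have -> : t = n + (t - n) by lia.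
rewrite rb_add -em.
set k := t - n.
have hk : k < t by rewrite /k; lia.
have -> : K + (rb b k + b ^ k * m) = b ^ k * m + (K + rb b k) by lia.
rewrite divnMDl // modnMDl.
have := IH k hk K; rewrite -em; lia.
Qed.

Definition Nl b l (u : nat -> nat) := \sum_(2 <= i < l.+1) u i * rb b (i - 1).
Definition Dl l (u : nat -> nat) := \sum_(2 <= i < l.+1) u i.

Lemma Nl_S b l u : 0 < l -> Nl b l.+1 u = Nl b l u + u l.+1 * rb b l.
Proof. by move=> hl; rewrite /Nl big_nat_recr //= subn1. Qed.

Lemma Dl_S l u : 0 < l -> Dl l.+1 u = Dl l u + u l.+1.
Proof. by move=> hl; rewrite /Dl big_nat_recr. Qed.

Lemma Nl1 b u : Nl b 1 u = 0.
Proof. by rewrite /Nl big_geq. Qed.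

Lemma Dl1 u : Dl 1 u = 0.
Proof. by rewrite /Dl big_geq. Qed.

Lemma Nl_zero b l u : (forall k, 2 <= k < l.+1 -> u k = 0) -> Nl b l u = 0.
Proof.
move=> H; rewrite /Nl big_nat_cond big1 // => i /andP[hi _].
by rewrite H.
Qed.

Lemma Nl_ext b l u v : (forall i, 2 <= i <= l -> u i = v i) -> Nl b l u = Nl b l v.
Proof. by move=> H; apply: eq_big_nat => i hi; rewrite H. Qed.

Lemma Nl_G b l u : 1 < b -> 0 < l ->
  (forall j, 2 <= j <= l -> u j <= b) ->
  (forall j, 2 <= j <= l -> u j = b -> forall k, 2 <= k < j -> u k = 0) ->
  Nl b l u < rb b l /\ G b l (Nl b l u) = Dl l u.
Proof.
move=> hb; elim: l => [//|l IH] _ H1 H2.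
case: (posnP l) => hl.
  by rewrite hl Nl1 Dl1 rbS rb0 G0.
have [IH1 IH2] : Nl b l u < rb b l /\ G b l (Nl b l u) = Dl l u.
  apply: IH => // j hj; first by apply: H1; lia.
  by move=> e k hk; apply: (H2 j) => //; lia.
rewrite Nl_S // Dl_S //.
have hr : 0 < rb b l by apply: rb_pos.
rewrite addnC G_S // IH2 addnC; split => //; last by rewrite addnC.
rewrite rbS.
have hu : u l.+1 <= b by apply: H1; lia.
case: (ltnP (u l.+1) b) => h.
  have := mul_succ_le (rb b l) h; lia.
have e : u l.+1 = b by lia.
rewrite Nl_zero; first by rewrite e; lia.
move=> k hk; apply: (H2 l.+1) => //; lia.
Qed.

Lemma Surj b l K : 1 < b -> 0 < l -> K < rb b l ->
  exists u, (forall j, 2 <= j <= l -> u j <= b) /\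
  (forall j, 2 <= j <= l -> u j = b -> forall k, 2 <= k < j -> u k = 0) /\
  Nl b l u = K.
Proof.
move=> hb; elim: l K => [//|l IH] K _ hK.
case: (posnP l) => hl.
  exists (fun _ => 0); split; first by move=> j; lia.
  split; first by move=> j; lia.
  by rewrite hl Nl1; move: hK; rewrite hl rbS rb0; lia.
have [r er] : {r | r = rb b l} by eexists.
have hr : 0 < r by rewrite er; apply: rb_pos.
rewrite rbS -er in hK.
have eK := divn_eq K r.
set d := K %/ r in eK *; set K1 := K %% r in eK *.
have hK1 : K1 < r by rewrite ltn_mod.
clearbody d K1.
have hd : d <= b.
  rewrite -(leq_pmul2r hr); move: hK; rewrite eK; lia.
case: (ltnP d b) => hdb.
  have [u1 [U1 [U2 U3]]] := IH K1 hl ltac:(by rewrite -er).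
  exists (fun i => if i == l.+1 then d else u1 i); split.
    move=> j hj /=; case: eqP => ej; first by lia.
    by apply: U1; lia.
  split.
    move=> j hj /=; case: eqP => ej.
      by move=> e; lia.
    move=> e k hk; have -> : (k == l.+1) = false by apply/eqP; lia.
    by apply: (U2 j) => //; lia.
  rewrite Nl_S //.
  have -> : Nl b l (fun i => if i == l.+1 then d else u1 i) = K1.
    rewrite -U3; apply: Nl_ext => i hi.
    by have -> : (i == l.+1) = false by apply/eqP; lia.
  rewrite /= eqxx -er eK; lia.
have ed : d = b by lia.
have eK1 : K1 = 0 by move: hK; rewrite eK ed; lia.
exists (fun i => if i == l.+1 then b else 0); split.
  by move=> j hj /=; case: eqP => _; lia.
split.
  move=> j hj /=; case: eqP => ej.
    move=> _ k hk; have -> : (k == l.+1) = false by apply/eqP; lia.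
    done.
  by move=> e; lia.
rewrite Nl_S // Nl_zero /=; first by rewrite eqxx -er eK eK1 ed; lia.
by move=> k hk; have -> : (k == l.+1) = false by apply/eqP; lia.
Qed.

Lemma gm_add (P : nat -> Prop) x y : gen_monoid P x -> gen_monoid P y -> gen_monoid P (x + y).
Proof.
move=> hx; elim=> [|y' g _ IH hg]; first by rewrite addn0.
by rewrite addnA; apply: gmS.
Qed.

Lemma gm_gen (P : nat -> Prop) g : P g -> gen_monoid P g.
Proof. by move=> h; rewrite -[g]add0n; apply: gmS => //; apply: gm0. Qed.

Lemma gm_mul (P : nat -> Prop) c x : gen_monoid P x -> gen_monoid P (c * x).
Proof.
move=> h; elim: c => [|c IH]; first by rewrite mul0n; apply: gm0.
by rewrite mulSn; apply: gm_add.
Qed.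

Lemma gen_a1 a b n : gen_a a b n 1 = rb b n.
Proof. by rewrite /gen_a subnn rb0 muln0 addn0. Qed.

Lemma m_in a b n : Sa a b n (rb b n).
Proof. by apply: gm_gen; exists 1; split => //; rewrite gen_a1. Qed.

Lemma Sa_ge a b n y : Sa a b n y -> 0 < y -> rb b n <= y.
Proof.
case=> [//|x g _ [i [_ ->]] _]; rewrite /gen_a; lia.
Qed.

Lemma sum_split a b n u :
  \sum_(2 <= i < n.+1) u i * gen_a a b n i = rb b n * Dl n u + a * Nl b n u.
Proof.
rewrite /gen_a /Dl /Nl big_distrr big_distrr -big_split /=.
by apply: eq_bigr => i _; lia.
Qed.

Lemma t_in_S a b n u : Sa a b n (\sum_(2 <= i < n.+1) u i * gen_a a b n i).
Proof.
apply: (big_ind (Sa a b n)); first exact: gm0.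
  by move=> x y; apply: gm_add.
move=> [|i] _; apply: gm_mul; apply: gm_gen.
  by exists 1; split => //; rewrite gen_a1 /gen_a sub0n rb0 muln0 addn0.
by exists i.+1.
Qed.

Lemma Inv a b n w : 1 < b -> 0 < n -> Sa a b n w ->
  exists C K, w = C * rb b n + a * K /\ G b n (K %% rb b n) <= C + K %/ rb b n.
Proof.
move=> hb hn; elim=> [|x g _ [C [K [ex hx]]] [i [hi ->]]].
  by exists 0, 0; split; [lia | rewrite mod0n div0n G0].
exists C.+1, (K + rb b (i - 1)); split; first by rewrite ex /gen_a mulSn; lia.
have := Ttrans (i - 1) K hb hn; lia.
Qed.

Lemma coprime_cancel m a N K : coprime m a -> N < m -> K < m ->
  a * N = a * K %[mod m] -> N = K.
Proof.
move=> hc hN hK.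
wlog le : N K hN hK / N <= K.
  move=> W e; case: (leqP N K) => h; first exact: W.
  by symmetry; apply: W => //; lia.
move=> e.
have : m %| a * K - a * N by rewrite -eqn_mod_dvd ?leq_mul2l ?le ?orbT // e.
rewrite -mulnBr Gauss_dvdr //.
case: (posnP (K - N)) => h; first by lia.
move/(dvdn_leq h); lia.
Qed.

Theorem theorem15 (a b n : nat) :
  0 < a -> 1 < b -> 1 < n -> coprime (rb b n) a ->
  forall w : nat,
    Apery_m (Sa a b n) w <->
    exists u : nat -> nat,
      inR b n u /\ w = \sum_(2 <= i < n.+1) u i * gen_a a b n i.
Proof.
move=> ha hb hn hc w.
have hn0 : 0 < n by lia.
have hm : 0 < rb b n by apply: rb_pos.
split.
  move=> [m' [[Sm' [m'pos m'min]] [Sw hAp]]].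
  have em' : m' = rb b n.
    have h1 := Sa_ge Sm' m'pos.
    have h2 := m'min _ (m_in a b n) hm.
    lia.
  subst m'.
  have [C [K [ew hG]]] := Inv hb hn0 Sw.
  have [m em] : {m | m = rb b n} by eexists.
  rewrite -em in ew hG hAp hm hc.
  have eK := divn_eq K m.
  set q := K %/ m in eK hG; set K0 := K %% m in eK hG.
  have hK0 : K0 < m by rewrite ltn_mod.
  clearbody q K0.
  have [u [U1 [U2 U3]]] := @Surj b n K0 hb hn0 ltac:(by rewrite -em).
  have [_ hGu] := Nl_G hb hn0 U1 U2.
  rewrite U3 in hGu.
  exists u; split; first by split.
  rewrite sum_split -em U3.
  set D := Dl n u in hGu *.
  have haq : q <= a * q by rewrite leq_pmull.
  set e := C + a * q - D.
  have he : e + D = C + a * q by rewrite /e; lia.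
  have ew2 : w = m * D + a * K0 + e * m.
    have : (e + D) * m = (C + a * q) * m by rewrite he.
    rewrite ew eK !mulnDl; lia.
  case: (posnP e) => e0; first by rewrite ew2 e0; lia.
  exfalso; case: hAp => [hw|]; first by move: hw; rewrite ew2; case: e e0 {he ew2} => // e' _; rewrite mulSn; lia.
  apply.
  have -> : w - m = (m * D + a * K0) + (e - 1) * m.
    rewrite ew2; case: e e0 {he ew2} => // e' _; rewrite mulSn; lia.
  apply: gm_add; last by apply: gm_mul; rewrite em; apply: m_in.
  have := t_in_S a b n u; rewrite sum_split -em U3 //.
move=> [u [[U1 U2] ->]].
exists (rb b n); split.
  split; first exact: m_in.
  split=> // y hy hy0; exact: Sa_ge hy hy0.
split; first exact: t_in_S.
have [m em] : {m | m = rb b n} by eexists.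
have [hN hGN] := Nl_G hb hn0 U1 U2.
rewrite sum_split -em.
rewrite -em in hN hc hm.
set N := Nl b n u in hN hGN *; set D := Dl n u in hGN *.
case: (ltnP (m * D + a * N) m) => hw; first by left.
right => Sw.
have [C [K [ew hG]]] := Inv hb hn0 Sw.
rewrite -em in ew hG.
have eK := divn_eq K m.
set q := K %/ m in eK hG; set K0 := K %% m in eK hG.
have hK0 : K0 < m by rewrite ltn_mod.
clearbody q K0 N D.
have E : D * m + a * N = (1 + C + a * q) * m + a * K0.
  rewrite !mulnDl; move: ew; rewrite eK; lia.
have eNK : N = K0.
  apply: (coprime_cancel hc hN hK0).
  by move/(congr1 (modn^~ m)): E; rewrite !modnMDl.
subst K0.
have eD : D = 1 + C + a * q.
  apply/eqP; rewrite -(eqn_pmul2r hm); apply/eqP; lia.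
have haq : q <= a * q by rewrite leq_pmull.
lia.
Qed.
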